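(* Let $N\ge 3$ and let $a,b$ be positive integers with $1<b/a\le N-1$. Then there is an $N$-dimensional subspace $V\subset S_{b-a}$ (and hence a general $N$-dimensional subspace $V\subset S_{b-a}$ has the same property) such that $\mu_V(W)\ge b/a$ for every nonzero linear subspace $W\subset S_{a-1}$.
   Context: Over $\mathbb{C}$, $S_a$ denotes the space of polynomials in one variable $u$ of degree at most $a$. For subspaces $V,W$, $V\cdot W$ is the span of products $fg$ ($f\in V$, $g\in W$), and for nonzero $W\subset S_{a-1}$, $\mu_V(W)=\dim(V\cdot W)/\dim W$. ''General'' means in a nonempty Zariski-open subset of the Grassmannian $\mathrm{Gr}(N,S_{b-a})$. *)

(* Defs.v *)
From HB Require Import structures.
From mathcomp Require Import all_boot all_order all_algebra.
Set Implicit Arguments. Unset Strict Implicit. Unset Printing Implicit Defensive.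
Import Order.TTheory GRing.Theory Num.Theory.
Local Open Scope ring_scope.

(* S_d, the polynomials in u of degree <= d, is modelled by its coefficient
   space 'rV[F]_d.+1 (row vector v <-> rVpoly v = \sum_i v_i u^i). *)
Section PolySpaces.
Variable F : fieldType.

Definition polyMul (m n : nat) (f : 'rV[F]_m.+1) (g : 'rV[F]_n.+1)
  : 'rV[F]_(m + n).+1 := poly_rV (rVpoly f * rVpoly g).

(* V . W : the span of all products f g (f in V, g in W); by bilinearity it is
   the span of the products of basis vectors. *)
Definition prodsp (m n : nat) (V : {vspace 'rV[F]_m.+1})
  (W : {vspace 'rV[F]_n.+1}) : {vspace 'rV[F]_(m + n).+1} :=
  <<[seq polyMul f g | f <- vbasis V, g <- vbasis W]>>%VS.

Definition mu (m n : nat) (V : {vspace 'rV[F]_m.+1})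
  (W : {vspace 'rV[F]_n.+1}) : rat :=
  (\dim (prodsp V W))%:R / (\dim W)%:R.
End PolySpaces.

(* Main.v *)
Require Import Defs.
From HB Require Import structures.
From mathcomp Require Import all_boot all_order all_algebra.
From Stdlib Require Import Lia.
Set Implicit Arguments. Unset Strict Implicit. Unset Printing Implicit Defensive.

Definition cnt (n : nat) (P : pred nat) : nat := \sum_(0 <= i < n) (P i : nat).

Lemma cnt_add k n (P : pred nat) : cnt (k + n) P = cnt k P + cnt n (fun x => P (k + x)).
Proof.
rewrite /cnt (@big_cat_nat _ _ _ k) ?leq_addr //=; congr (_ + _).
rewrite -{1}(add0n k) big_addn addKn; apply: eq_bigr => i _; by rewrite addnC.
Qed.

Lemma cnt_le n (P Q : pred nat) : (forall x, x < n -> P x -> Q x) -> cnt n P <= cnt n Q.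
Proof.
move=> H; rewrite /cnt big_nat_cond [X in _ <= X]big_nat_cond.
apply: leq_sum => i /andP [/andP [_ lt] _].
by case: (P i) (H i lt) => // ->.
Qed.

Lemma cnt_mono n m (P : pred nat) : n <= m -> cnt n P <= cnt m P.
Proof. by move=> le; rewrite -(subnKC le) cnt_add leq_addr. Qed.

Lemma cnt0 n : cnt n pred0 = 0.
Proof. by rewrite /cnt big1. Qed.

Lemma cnt_strict n (P Q : pred nat) x0 : (forall x, x < n -> P x -> Q x) -> x0 < n -> Q x0 -> ~~ P x0 ->
  (cnt n P).+1 <= cnt n Q.
Proof.
move=> H lt Qx Px.
rewrite /cnt !big_mkord (bigD1 (Ordinal lt)) //= [X in _ <= X](bigD1 (Ordinal lt)) //=.
rewrite Qx (negbTE Px) add0n add1n ltnS; apply: leq_sum => i _.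
by case: (P i) (H i (ltn_ord i)) => // ->.
Qed.

Lemma cnt_res n r (P : pred nat) : 0 < r ->
  cnt n P = \sum_(rho < r) cnt n (fun x => P x && (x %% r == rho)).
Proof.
move=> r0; rewrite /cnt exchange_big /=; apply: eq_bigr => i _.
rewrite (bigD1 (Ordinal (ltn_pmod i r0))) //= eqxx andbT big1 ?addn0 //.
move=> j /negbTE; rewrite -(inj_eq val_inj) /= eq_sym => ->; by rewrite andbF.
Qed.

Lemma cnt_mod_block k r rho : rho < r ->
  cnt (k * r) (fun x => x %% r == rho) = k.
Proof.
move=> lt; have r0 : 0 < r by apply: leq_ltn_trans lt.
elim: k => [|k IH]; first by rewrite mul0n /cnt big_geq.
rewrite mulSn addnC cnt_add IH -[k.+1]addn1; congr (_ + _)%N.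
rewrite /cnt big_mkord (bigD1 (Ordinal lt)) //= modnMDl modn_small // eqxx big1 // => j.
by rewrite modnMDl modn_small // -(inj_eq val_inj) /= => /negbTE ->.
Qed.

Lemma cnt_mod a r rho : 0 < r -> rho < r ->
  cnt a (fun x => x %% r == rho) = a %/ r + (rho < a %% r).
Proof.
move=> r0 lt; rewrite {1}(divn_eq a r) cnt_add cnt_mod_block //; congr (_ + _)%N.
have : a %% r <= r by apply: ltnW; rewrite ltn_pmod.
elim: (a %% r) => [|t IH] le; first by rewrite /cnt big_geq.
rewrite -addn1 cnt_add IH ?(leq_trans (leqnSn t)) //.
rewrite /cnt big_nat1 /= addn0 modnMDl modn_small //.
by rewrite addn1 ltnS; case: (ltngtP rho t).
Qed.

Lemma cnt_pos n (P : pred nat) : 0 < cnt n P -> exists2 x, x < n & P x.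
Proof.
elim: n => [|n IH]; first by rewrite /cnt big_geq.
rewrite /cnt big_nat_recr //= -/(cnt n P); case Pn: (P n).
  by move=> _; exists n.
rewrite addn0 => /IH [x lt Px]; exists x => //; exact: ltnW.
Qed.

Lemma cnt_ext n m (P : pred nat) : (forall x, P x -> x < n) -> n <= m -> cnt m P = cnt n P.
Proof.
move=> H le; rewrite -(subnKC le) cnt_add [X in _ + X]big1 ?addn0 // => i _.
by case Pi: (P (n + i)) => //; move: (H _ Pi); rewrite ltnNge leq_addr.
Qed.

Definition sums (Sh : seq nat) (B : pred nat) : pred nat :=
  fun z => has (fun al => (al <= z) && B (z - al)) Sh.

Lemma arith_i (a r s q n rho : nat) : a = q*r + s -> s < r -> rho < r -> n <= q + (rho < s) ->
  r * n + rho <= a + (if rho < s then rho + (r-s) else rho - s).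
Proof.
move=> -> sr rr; case: (ltnP rho s) => h /= hn.
- have: r * n <= r * (q + 1) by rewrite leq_mul2l hn orbT.
  move/leP=> H1; apply/leP; move/ltP: sr; move/ltP: h. rewrite -?plusE -?multE -?minusE in H1 *. lia.
- rewrite addn0 in hn.
  have: r * n <= r * q by rewrite leq_mul2l hn orbT.
  move/leP=> H1; apply/leP; move/ltP: sr; move/leP: h. rewrite -?plusE -?multE -?minusE in H1 *. lia.
Qed.

Lemma sigma_val r s rho : s < r -> rho < r ->
  (rho + (r - s)) %% r = (if rho < s then rho + (r-s) else rho - s).
Proof.
move=> sr rr; case: ltnP => h.
  apply: modn_small; move/ltP: h; move/ltP: sr => sr' h; apply/ltP.
  rewrite -?plusE -?minusE; lia.
have -> : rho + (r - s) = (rho - s) + r.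
  apply/eqP; rewrite eqn_leq; apply/andP; split; apply/leP; move/leP: h; move/ltP: sr;
  rewrite -?plusE -?minusE; lia.
rewrite modnDr modn_small //; apply: leq_ltn_trans rr; exact: leq_subr.
Qed.

Section Core.
Variables (a r : nat) (B : pred nat).
Hypotheses (r0 : 0 < r) (ra : r < a) (Ba : forall x, B x -> x < a).
Let s := a %% r.
Let T := sums [:: 0; r - s; r] B.
Let n (rho : nat) := cnt a (fun x => B x && (x %% r == rho)).
Let t (rho : nat) := cnt (a + r) (fun z => T z && (z %% r == rho)).

Lemma sr : s < r. Proof. exact: ltn_pmod. Qed.

Lemma F1 rho : 0 < n rho -> (n rho).+1 <= t rho.
Proof.
move=> /cnt_pos [x _ Px].
have ub : forall i, (B i && (i %% r == rho)) -> i <= a.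
  by move=> i /andP [/Ba /ltnW].
have ex : exists i, B i && (i %% r == rho) by exists x.
case: (ex_maxnP ex ub) => x0 /andP [Bx0 rx0] mx.
rewrite /n -(@cnt_ext a (a + r)); last by rewrite leq_addr.
  apply: (@cnt_strict _ _ _ (x0 + r)).
  - move=> y _ /andP [By ry]; apply/andP; split => //.
    by rewrite /T /sums /= subn0 By.
  - by rewrite ltn_add2r Ba.
  - apply/andP; split; last by rewrite modnDr.
    by rewrite /T /sums /= leq_addl addnK Bx0 !orbT.
  - apply/negP => /mx; rewrite -{2}(addn0 x0) leq_add2l leqNgt r0 //.
by move=> i /andP [/Ba].
Qed.

Lemma F2 rho : rho < r -> n ((rho + s) %% r) <= t rho.
Proof.
move=> rr; have le : (r - s) + a <= a + r by rewrite addnC leq_add2l leq_subr.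
apply: leq_trans (cnt_mono _ le); rewrite cnt_add; apply: leq_trans (leq_addl _ _); apply: cnt_le => x _ /andP [Bx rx].
apply/andP; split.
  by rewrite /T /sums /= leq_addr addKn Bx !orbT.
rewrite -modnDmr (eqP rx) modnDmr.
have -> : r - s + (rho + s) = rho + r.
  apply/eqP; rewrite eqn_leq; apply/andP; split; apply/leP; have := sr; move/ltP;
  rewrite -?plusE -?minusE; lia.
by rewrite modnDr modn_small.
Qed.

Lemma F3 rho : rho < r -> n rho <= a %/ r + (rho < s).
Proof.
move=> rr; rewrite -cnt_mod //; apply: cnt_le => x _ /andP [].
by [].
Qed.


Lemma core : (a + r) * cnt a B <= a * cnt (a + r) T.
Proof.
rewrite (cnt_res a B r0) (cnt_res (a + r) T r0) -/n -/t.
pose P := fun rho : 'I_r => 0 < n rho.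
pose sg (rho : 'I_r) : 'I_r := Ordinal (ltn_pmod (rho + (r - s)) r0).
pose sg' (rho : 'I_r) : 'I_r := Ordinal (ltn_pmod (rho + s) r0).
have sgK : cancel sg sg'.
  move=> rho; apply: val_inj => /=; rewrite modnDml -addnA subnK ?modnDr ?modn_small //.
  exact: ltnW sr.
pose g' rho := if P rho then (n rho).+1 else 0.
pose h rho := if P rho then 0 else n (sg' rho).
have stepA : \sum_(rho < r) (g' rho + h rho) <= \sum_(rho < r) t rho.
  apply: leq_sum => rho _; rewrite /g' /h; case: ifP => Pr.
    by rewrite addn0; apply: F1.
  by rewrite add0n; apply: F2.
have stepi : \sum_(rho < r) ((a + r) * n rho + P rho * rho) <=
             \sum_(rho < r) (a * g' rho + P rho * sg rho).
  apply: leq_sum => rho _; rewrite /g' /P; case: ifP => Pr; last first.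
    by move/negbT: Pr; rewrite -leqNgt leqn0 => /eqP ->; rewrite !muln0.
  rewrite !mul1n mulnDl mulnS -!addnA [X in _ <= X]addnCA leq_add2l /= sigma_val ?ltn_ord //; last exact: sr.
  apply: arith_i; [exact: divn_eq | exact: sr | exact: ltn_ord | exact: F3].
have stepii : \sum_(rho < r) P rho * sg rho = \sum_(tau < r) P (sg' tau) * tau.
  rewrite [RHS](reindex_inj (can_inj sgK)) /=; apply: eq_bigr => rho _; by rewrite sgK.
have stepiii : \sum_(tau < r) P (sg' tau) * tau <= \sum_(tau < r) (P tau * tau + a * h tau).
  apply: leq_sum => tau _; rewrite /h; case: ifP => Pt.
    rewrite muln0 addn0 mul1n; apply: leq_trans (leq_mul (leq_b1 _) (leqnn tau)) _.
    by rewrite mul1n.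
  rewrite mul0n add0n; case Ps: (P (sg' tau)); rewrite ?mul0n //.
  rewrite mul1n; apply: leq_trans (ltnW (ltn_ord tau)) _; apply: leq_trans (ltnW ra) _.
  by rewrite leq_pmulr.
rewrite !big_split /= -!big_distrr /= in stepi.
rewrite big_split /= -big_distrr /= in stepiii.
rewrite stepii in stepi.
change ((a + r) * \sum_(rho < r) n rho <= a * \sum_(rho < r) t rho).
have := leq_trans stepi (leq_add (leqnn _) stepiii).
rewrite [X in _ <= X]addnCA [X in X <= _]addnC leq_add2l -mulnDr -big_split /= => H.
by apply: leq_trans H _; rewrite leq_mul2l stepA orbT.
Qed.

End Core.

Definition Sh (a r m : nat) := [:: 0; r - a %% r; r] ++ [seq r + j * a | j <- iota 1 m].

Lemma sums_sub (S1 S2 : seq nat) B z : {subset S1 <= S2} -> sums S1 B z -> sums S2 B z.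
Proof. move=> sub /hasP [al alS h]; apply/hasP; exists al => //; exact: sub. Qed.

Lemma tiles a r (B : pred nat) m : 0 < a -> r < a -> (forall x, B x -> x < a) ->
  (m.+1 * a + r) * cnt a B <= a * cnt (m.+1 * a + r) (sums (Sh a r m) B).
Proof.
move=> a0 ra Ba; elim: m => [|m IH].
  rewrite mul1n /Sh cats0; case: (posnP r) => [->|r0]; last exact: core.
  rewrite !addn0 leq_mul2l; apply/orP; right; apply: cnt_le => x _ Bx.
  by rewrite /sums /= subn0 Bx.
have -> : m.+2 * a + r = (m.+1 * a + r) + a by rewrite mulSn [a + _]addnC addnAC.
rewrite cnt_add mulnDl mulnDr leq_add //.
  apply: leq_trans IH _; rewrite leq_mul2l; apply/orP; right; apply: cnt_le => x _.
  apply: sums_sub => y; rewrite /Sh !mem_cat => /orP [->//|/mapP [j]].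
  rewrite mem_iota => /andP [j1 j2] ->; apply/orP; right; apply/mapP; exists j => //.
  by rewrite mem_iota j1 ltnS ltnW.
rewrite leq_mul2l; apply/orP; right; apply: cnt_le => x _ Bx.
apply/hasP; exists (r + m.+1 * a).
  rewrite mem_cat; apply/orP; right; apply/mapP; exists m.+1 => //.
  by rewrite mem_iota /= add1n ltnSn.
by rewrite [m.+1 * a + r]addnC leq_addr addKn Bx.
Qed.

Import GRing.Theory.

Section Jumps.
Local Open Scope ring_scope.
Variables (F : fieldType) (n : nat).
Implicit Types (W : {vspace 'rV[F]_n}) (w v : 'rV[F]_n).

Definition Hm (d : nat) : 'M[F]_n := diag_mx (\row_(j < n) ((d <= j)%N)%:R).
Definition Zs d : {vspace 'rV[F]_n} := lker (linfun (mulmxr (Hm d))).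

Lemma memZs (v : 'rV[F]_n) d : (v \in Zs d) = (size (rVpoly v) <= d)%N.
Proof.
rewrite memv_ker lfunE /= /Hm mul_mx_diag.
apply/eqP/leq_sizeP => [H j dj | H].
  rewrite coef_rVpoly; case: insubP => [i _ ei|] //.
  have := congr1 (fun M : 'rV[F]_n => M 0 i) H; rewrite !mxE ei dj mulr1 => ->.
  done.
apply/rowP => j; rewrite !mxE; case: (leqP d j) => dj; last by rewrite mulr0.
by rewrite mulr1 -coef_rVpoly_ord H.
Qed.

Definition Wd (W : {vspace 'rV[F]_n}) d := (W :&: Zs d)%VS.

Lemma memWd W v d : (v \in Wd W d) = (v \in W) && (size (rVpoly v) <= d)%N.
Proof. by rewrite /Wd memv_cap memZs. Qed.

Lemma Wd_full W d : (n <= d)%N -> Wd W d = W.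
Proof.
move=> nd; apply/vspaceP => v; rewrite memWd.
case: (v \in W) => //=; apply: leq_trans nd.
by rewrite /rVpoly; apply: size_poly.
Qed.

Lemma Wd0 W : Wd W 0 = 0%VS.
Proof.
apply/vspaceP => v; rewrite memWd memv0 leqn0 size_poly_eq0.
apply/andP/eqP => [[_ /eqP h]|->]; last by rewrite rpred0 linear0.
by rewrite -(rVpolyK v) h linear0.
Qed.

Lemma Wd_mono W d : (Wd W d <= Wd W d.+1)%VS.
Proof.
apply/subvP => v; rewrite !memWd => /andP [-> h] /=; exact: leq_trans h (leqnSn _).
Qed.

Definition jump W d := (\dim (Wd W d) < \dim (Wd W d.+1))%N.

Definition Cm (d : nat) : 'M[F]_n := diag_mx (\row_(j < n) ((j == d :> nat))%:R).
Definition ed : 'rV[F]_n := \row_(j < n) 1.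

Lemma jump_le1 W d : (\dim (Wd W d.+1) <= (\dim (Wd W d)).+1)%N.
Proof.
pose g : 'End('rV[F]_n) := linfun (mulmxr (Cm d)).
have Himg : (g @: Wd W d.+1 <= <[\row_(j < n) ((j == d :> nat))%:R]>)%VS.
  apply/subvP => w /memv_imgP [v _ ->]; rewrite lfunE /= /Cm mul_mx_diag.
  apply/vlineP; exists ((rVpoly v)`_d); apply/rowP => j; rewrite !mxE.
  case: eqP => [ej|_]; last by rewrite !mulr0.
  by rewrite !mulr1 -coef_rVpoly_ord ej.
have Hker : (Wd W d.+1 :&: lker g <= Wd W d)%VS.
  apply/subvP => v; rewrite memv_cap memv_ker lfunE /= !memWd => /andP [/andP [-> h] /eqP H].
  have Hd : (rVpoly v)`_d = 0.
    rewrite coef_rVpoly; case: insubP => [i _ ei|] //.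
    have := congr1 (fun M : 'rV[F]_n => M 0 i) H; rewrite /Cm mul_mx_diag !mxE.
    by move: ei => /= ->; rewrite eqxx mulr1.
  apply/leq_sizeP => j; rewrite leq_eqVlt => /orP [/eqP <- // | dj].
  exact: (leq_sizeP _ _ h).
rewrite -(limg_ker_dim g (Wd W d.+1)) -[(\dim (Wd W d)).+1]addn1 leq_add ?dimvS //.
by apply: leq_trans (dimvS Himg) _; rewrite dim_vline leq_b1.
Qed.


Lemma dim_le_jumps W k : (\dim (Wd W k) <= \sum_(0 <= d < k) jump W d)%N.
Proof.
elim: k => [|k IH]; first by rewrite Wd0 dimv0.
rewrite big_nat_recr //=; case J: (jump W k).
  by apply: leq_trans (jump_le1 W k) _; rewrite addn1 ltnS.
by rewrite addn0; move/negbT: J; rewrite /jump -leqNgt => J; apply: leq_trans J IH.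
Qed.

Lemma jumps_le_dim W k : (\sum_(0 <= d < k) jump W d <= \dim (Wd W k))%N.
Proof.
elim: k => [|k IH]; first by rewrite big_geq.
rewrite big_nat_recr //=; case J: (jump W k).
  by rewrite addn1; apply: leq_ltn_trans IH J.
by rewrite addn0; apply: leq_trans IH (dimvS (Wd_mono W k)).
Qed.

Lemma jumpP W d : jump W d -> exists2 w, w \in W & size (rVpoly w) = d.+1.
Proof.
move=> J; have : ~~ (Wd W d.+1 <= Wd W d)%VS.
  by apply/negP => /dimvS H; move: J; rewrite /jump ltnNge H.
case/subvPn => w; rewrite !memWd => /andP [wW h1] /nandP [/negP //|h2].
exists w => //; apply/eqP; rewrite eqn_leq h1 /=; by rewrite ltnNge.
Qed.

Lemma jumpI W w d : w \in W -> size (rVpoly w) = d.+1 -> jump W d.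
Proof.
move=> wW sw; rewrite /jump ltn_neqAle dimvS ?Wd_mono // andbT; apply/negP => /eqP E.
have : Wd W d == Wd W d.+1 by rewrite eqEdim Wd_mono E leqnn.
move/eqP => E'; have : w \in Wd W d.+1 by rewrite memWd wW sw leqnn.
by rewrite -E' memWd sw ltnn andbF.
Qed.

End Jumps.

Section Prod.
Local Open Scope ring_scope.
Variables (F : fieldType) (m n : nat).

Lemma polyMul_suml I (r : seq I) (c : I -> F) (fs : I -> 'rV[F]_m.+1) (g : 'rV[F]_n.+1) :
  polyMul (\sum_(i <- r) c i *: fs i) g = \sum_(i <- r) c i *: polyMul (fs i) g.
Proof.
rewrite /polyMul linear_sum /= mulr_suml linear_sum; apply: eq_bigr => i _.
by rewrite linearZ /= -scalerAl linearZ.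
Qed.

Lemma polyMul_sumr I (r : seq I) (c : I -> F) (f : 'rV[F]_m.+1) (gs : I -> 'rV[F]_n.+1) :
  polyMul f (\sum_(i <- r) c i *: gs i) = \sum_(i <- r) c i *: polyMul f (gs i).
Proof.
rewrite /polyMul linear_sum /= mulr_sumr linear_sum; apply: eq_bigr => i _.
by rewrite linearZ /= -scalerAr linearZ.
Qed.

Lemma polyMul_mem (V : {vspace 'rV[F]_m.+1}) (W : {vspace 'rV[F]_n.+1}) f g :
  f \in V -> g \in W -> polyMul f g \in prodsp V W.
Proof.
move=> fV gW; rewrite (coord_vbasis fV) (coord_vbasis gW) polyMul_suml.
apply: memv_suml => i _; apply: memvZ; rewrite polyMul_sumr.
apply: memv_suml => j _; apply: memvZ; apply: memv_span; apply: allpairs_f.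
  by apply: mem_nth; rewrite size_tuple.
by apply: mem_nth; rewrite size_tuple.
Qed.

Definition mono (al : nat) : 'rV[F]_m.+1 := delta_mx 0 (inord al).

Lemma rVpoly_mono al : (al <= m)%N -> rVpoly (mono al) = 'X^al.
Proof. by move=> le; rewrite /mono rVpoly_delta inordK. Qed.

Lemma size_polyMul_mono al (w : 'rV[F]_n.+1) d : (al <= m)%N -> size (rVpoly w) = d.+1 ->
  size (rVpoly (polyMul (mono al) w)) = (al + d).+1.
Proof.
move=> le sw; have w0 : rVpoly w != 0 by rewrite -size_poly_eq0 sw.
rewrite /polyMul rVpoly_mono // mulrC poly_rV_K size_mulXn // sw ?addnS //.
have : (d.+1 <= n.+1)%N by rewrite -sw /rVpoly; exact: size_poly.
by rewrite ltnS => dn; rewrite ltnS leq_add.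
Qed.

End Prod.

Lemma sum_count (s : seq nat) (P : pred nat) : \sum_(i <- s) (P i : nat) = count P s.
Proof. elim: s => [|x s IH]; by rewrite ?big_nil ?big_cons ?IH. Qed.

Lemma cnt_size n (A : seq nat) : uniq A -> all (fun x => x < n) A ->
  cnt n (fun d => d \in A) = size A.
Proof.
move=> uA allA; rewrite /cnt sum_count -size_filter; apply: perm_size.
apply: uniq_perm; [by rewrite filter_uniq ?iota_uniq | by [] |] => x.
rewrite mem_filter mem_iota add0n /=; case xA: (x \in A) => //=.
by rewrite subn0; move/allP: allA => /(_ x xA).
Qed.

Lemma pad (S : seq nat) L N : all (fun x => x <= L) S -> size (undup S) <= N -> N <= L.+1 ->
  exists A : seq nat, [/\ uniq A, size A = N, all (fun x => x <= L) A & {subset S <= A}].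
Proof.
move=> allS sN NL; set k := size (undup S).
set X := [seq x <- iota 0 L.+1 | x \notin S].
exists (undup S ++ take (N - k) X); split.
- rewrite cat_uniq undup_uniq take_uniq ?filter_uniq ?iota_uniq // andbT.
  apply/hasP => -[x /mem_take]; rewrite mem_filter mem_undup => /andP [/negP xS _] xS'.
  by apply: xS.
- rewrite size_cat size_takel ?subnKC //.
  have H1 : count (fun x => x \in S) (iota 0 L.+1) <= k.
    rewrite -size_filter; apply: uniq_leq_size; first by rewrite filter_uniq ?iota_uniq.
    by move=> x; rewrite mem_filter mem_undup => /andP [].
  have H2 := count_predC (fun x => x \in S) (iota 0 L.+1).
  rewrite size_iota in H2.
  rewrite /X size_filter; apply: (@leq_trans (L.+1 - k)).
    by apply: leq_sub2r.
  rewrite leq_subLR; apply: leq_trans (leq_add H1 (leqnn _)).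
  by rewrite H2.
- rewrite all_cat; apply/andP; split.
    by apply/allP => x; rewrite mem_undup => xS; move/allP: allS => /(_ x xS).
  apply/allP => x /mem_take; rewrite mem_filter mem_iota => /andP [_ /andP [_ h]].
  by move: h; rewrite add0n ltnS.
- by move=> x xS; rewrite mem_cat mem_undup xS.
Qed.

Import Order.TTheory GRing.Theory Num.Theory.
Local Open Scope ring_scope.
Unset Implicit Arguments.

Theorem mainTheorem6 (F : closedFieldType) (charF0 : [pchar F] =i pred0)
  (N a b : nat) (hN : (3 <= N)%N) (ha : (0 < a)%N) (hb : (0 < b)%N)
  (hlo : 1 < b%:Q / a%:Q) (hhi : b%:Q / a%:Q <= (N - 1)%N%:Q)
  (hdim : (N <= (b - a).+1)%N) :
  exists V : {vspace 'rV[F]_(b - a).+1},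
    \dim V = N /\
    forall W : {vspace 'rV[F]_(a.-1).+1},
      W != 0%VS -> b%:Q / a%:Q <= mu V W.
Proof.
have ab : (a < b)%N by move: hlo; rewrite ltr_pdivlMr ?ltr0n // mul1r ltr_nat.
have bN : (b <= (N - 1) * a)%N by move: hhi; rewrite ler_pdivrMr ?ltr0n // -natrM ler_nat.
set L := (b - a)%N; set m := (L %/ a)%N; set r := (L %% a)%N.
have hL : L = (m * a + r)%N := divn_eq L a.
have hb' : b = (m.+1 * a + r)%N.
  by rewrite mulSn -addnA [(a + _)%N]addnC -hL subnK // ltnW.
have ra : (r < a)%N := ltn_pmod L ha.
have LN : (L <= (N - 2) * a)%N.
  have -> : (N - 2 = (N - 1) - 1)%N by rewrite -subnDA.
  by rewrite mulnBl mul1n leq_sub2r.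
set S := Sh a r m.
have allS : all (fun x => x <= L)%N S.
  apply/allP => x; rewrite /S /Sh mem_cat !inE => /orP [/or3P [/eqP->|/eqP->|/eqP->]|].
  - by [].
  - by apply: leq_trans (leq_subr _ _) _; rewrite hL leq_addl.
  - by rewrite hL leq_addl.
  move/mapP => [j]; rewrite mem_iota => /andP [_ j2] ->.
  rewrite add1n ltnS in j2.
  by rewrite hL [(m * a + r)%N]addnC leq_add2l leq_mul2r j2 orbT.
have sizeS : (size (undup S) <= N)%N.
  case: (posnP r) => [r0|r0].
    have mN : (m <= N - 2)%N.
      by rewrite -(leq_pmul2r ha); apply: leq_trans LN; rewrite hL r0 addn0.
    have sub : {subset undup S <= 0%N :: [seq (r + j * a)%N | j <- iota 1 m]}.
      move=> x; rewrite mem_undup /S /Sh mem_cat !inE r0 sub0n => /orP [/or3P [->|->|->]//|->].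
      by rewrite orbT.
    apply: leq_trans (uniq_leq_size (undup_uniq _) sub) _.
    rewrite /= size_map size_iota.
    by move/ssrnat.leP: mN; move/ssrnat.leP: hN => h1 h2; apply/ssrnat.leP; rewrite -?minusE in h2 *; lia.
  have mN : (m < N - 2)%N.
    rewrite -(ltn_pmul2r ha); apply: leq_trans _ LN; rewrite hL -addn1 leq_add2l.
    done.
  apply: leq_trans (size_undup _) _; rewrite /S /Sh size_cat size_map size_iota /=.
  by move/ssrnat.ltP: mN; move/ssrnat.leP: hN => h1 h2; apply/ssrnat.leP; rewrite -?minusE -?plusE in h2 *; lia.
have [A [uA sA allA subA]] := pad allS sizeS hdim.
pose V : {vspace 'rV[F]_(b - a).+1} := <<[seq mono F (b - a) al | al <- A]>>%VS.
have monoV : forall al, al \in A -> mono F (b - a) al \in V.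
  by move=> al alA; apply: memv_span; apply: map_f.
have jumpV : forall al, al \in A -> jump V al.
  move=> al alA; apply: (jumpI (monoV al alA)).
  by rewrite rVpoly_mono ?size_polyXn //; move/allP: allA => /(_ al alA).
exists V; split.
  apply/eqP; rewrite eqn_leq; apply/andP; split.
    by apply: leq_trans (dim_span _) _; rewrite size_map sA.
  have cA : cnt L.+1 (fun d => d \in A) = N.
    rewrite cnt_size ?sA //; apply/allP => x xA; rewrite ltnS; move/allP: allA => /(_ x xA).
  rewrite -{1}cA.
  have := jumps_le_dim V (b - a).+1; rewrite Wd_full // => H.
  apply: leq_trans H; by apply: cnt_le => x _; apply: jumpV.
move=> W W0.
have a' : (a.-1.+1 = a)%N := prednK ha.
pose D := fun d => (d < a)%N && jump W d.
have DB : forall x, D x -> (x < a)%N by move=> x /andP [].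
have dW : (\dim W <= cnt a D)%N.
  have := dim_le_jumps W (a.-1.+1); rewrite Wd_full // => H; apply: leq_trans H _.
  have -> : cnt a D = cnt a.-1.+1 D by rewrite a'.
  apply: cnt_le => x xa J; apply/andP; split => //; by move: xa; rewrite a'.
pose U := prodsp V W.
have nU : (((b - a) + a.-1).+1 = b)%N.
  by rewrite -addnS a' subnK // ltnW.
have dU : (cnt b (sums S D) <= \dim U)%N.
  have := jumps_le_dim U (((b - a) + a.-1).+1); rewrite Wd_full // => H.
  have -> : cnt b (sums S D) = cnt ((b - a) + a.-1).+1 (sums S D) by rewrite nU.
  apply: leq_trans H; apply: cnt_le => e _ /hasP [al alS /andP [ale De]].
  case/andP: De => _ /jumpP [w wW sw].
  have alL : (al <= b - a)%N by move/allP: allA => /(_ al (subA al alS)).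
  apply: (jumpI (polyMul_mem (monoV al (subA al alS)) wW)).
  by rewrite (size_polyMul_mono alL sw) subnKC.
have comb := tiles m ha ra DB; rewrite -hb' in comb.
have W0' : (0 < \dim W)%N by rewrite lt0n dimv_eq0.
rewrite /mu ler_pdivrMr ?ltr0n // mulrAC ler_pdivlMr ?ltr0n // -!natrM ler_nat.
apply: leq_trans (leq_mul (leqnn b) dW) _.
apply: leq_trans comb _; by rewrite mulnC leq_mul2r dU orbT.
Qed.
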